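(* Let $H$ be a complex Hilbert space, $\varphi,\psi:[0,1]\to\mathbb{R}$ continuous, $A\in\mathbb{B}(H)$ and $t\in[0,1]$. Then $$\omega_t^2(\varphi,\psi;A)\le|\varphi(t)|^2\omega^2(A)+|\varphi(t)\psi(t)|\,\omega(A^2)+\frac{|\varphi(t)|+|\psi(t)|}{2}\,|\psi(t)|\,\|A^*A+AA^*\|.$$
   Context: $S_1(H)$ is the unit sphere of $H$, $\omega(T)=\sup_{x\in S_1(H)}|\langle Tx,x\rangle|$, and $\omega_t(\varphi,\psi;A)=\sup_{x\in S_1(H)}|\langle(\varphi(t)A+\psi(t)A^* )x,x\rangle|$. *)

(* Defs.v *)
From HB Require Import structures.
From mathcomp Require Import all_boot all_order all_algebra.
From mathcomp Require Import complex.
From mathcomp Require Import boolp classical_sets set_interval reals topology normedtype.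
Set Implicit Arguments. Unset Strict Implicit. Unset Printing Implicit Defensive.
Import Order.TTheory GRing.Theory Num.Theory numFieldNormedType.Exports.
Local Open Scope ring_scope.
Local Open Scope classical_set_scope.

Definition cabs (R : realType) (z : R[i]) : R :=
  Num.sqrt (complex.Re z ^+ 2 + complex.Im z ^+ 2).

Definition hnorm (R : realType) (V : lmodType R[i]) (ip : V -> V -> R[i]) (x : V) : R :=
  Num.sqrt (complex.Re (ip x x)).

Definition is_inner_product (R : realType) (V : lmodType R[i]) (ip : V -> V -> R[i]) : Prop :=
  [/\ (forall (a : R[i]) (x y z : V), ip (a *: x + y) z = a * ip x z + ip y z),
      (forall x y : V, ip y x = Num.conj (ip x y)),
      (forall x : V, 0 <= ip x x) &
      (forall x : V, ip x x = 0 -> x = 0)].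

Definition is_complete (R : realType) (V : lmodType R[i]) (ip : V -> V -> R[i]) : Prop :=
  forall u : nat -> V,
    (forall e : R, 0 < e -> exists N : nat, forall m n : nat, (N <= m)%N -> (N <= n)%N ->
        hnorm ip (u m - u n) < e) ->
    exists l : V, forall e : R, 0 < e -> exists N : nat, forall n : nat, (N <= n)%N ->
        hnorm ip (u n - l) < e.

Definition is_hilbert (R : realType) (V : lmodType R[i]) (ip : V -> V -> R[i]) : Prop :=
  is_inner_product ip /\ is_complete ip.

Definition unit_sphere (R : realType) (V : lmodType R[i]) (ip : V -> V -> R[i]) : set V :=
  [set x | hnorm ip x = 1].

Definition is_bounded_op (R : realType) (V : lmodType R[i]) (ip : V -> V -> R[i])
  (T : V -> V) : Prop :=
  linear T /\ exists M : R, forall x : V, hnorm ip (T x) <= M * hnorm ip x.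

Definition is_adjoint (R : realType) (V : lmodType R[i]) (ip : V -> V -> R[i])
  (T Ts : V -> V) : Prop :=
  forall x y : V, ip (T x) y = ip x (Ts y).

Definition numrad (R : realType) (V : lmodType R[i]) (ip : V -> V -> R[i]) (T : V -> V) : R :=
  sup [set cabs (ip (T x) x) | x in unit_sphere ip].

Definition opnorm (R : realType) (V : lmodType R[i]) (ip : V -> V -> R[i]) (T : V -> V) : R :=
  sup [set hnorm ip (T x) | x in unit_sphere ip].

Definition numrad_t (R : realType) (V : lmodType R[i]) (ip : V -> V -> R[i])
  (phi psi : R -> R) (A As : V -> V) (t : R) : R :=
  numrad ip (fun x => ((phi t)%:C)%C *: A x + ((psi t)%:C)%C *: As x).

(* Main.v *)
Require Import Defs.
From HB Require Import structures.
From mathcomp Require Import all_boot all_order all_algebra.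
From mathcomp Require Import complex.
From mathcomp Require Import boolp classical_sets set_interval reals topology normedtype.
From mathcomp Require Import ring lra.
Import Order.TTheory GRing.Theory Num.Theory numFieldNormedType.Exports.
Local Open Scope ring_scope.
Local Open Scope classical_set_scope.
Set Implicit Arguments. Unset Strict Implicit.

Lemma cabsE (R : realType) (z : R[i]) : ((cabs z)%:C)%C = `|z|.
Proof. by rewrite normc_def. Qed.

Lemma cabs_ge0 (R : realType) (z : R[i]) : 0 <= cabs z.
Proof. exact: sqrtr_ge0. Qed.

Lemma cabsM (R : realType) (z w : R[i]) : cabs (z * w) = cabs z * cabs w.
Proof. by apply: (@complexI R); rewrite rmorphM /= !cabsE normrM. Qed.

Lemma cabsD (R : realType) (z w : R[i]) : cabs (z + w) <= cabs z + cabs w.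
Proof. by rewrite -lecR rmorphD /= !cabsE ler_normD. Qed.

Lemma cabs2 (R : realType) (z : R[i]) :
  cabs z ^+ 2 = complex.Re z ^+ 2 + complex.Im z ^+ 2.
Proof. by rewrite /cabs sqr_sqrtr // addr_ge0 // sqr_ge0. Qed.

Lemma Re_le_cabs (R : realType) (z : R[i]) : complex.Re z <= cabs z.
Proof.
have [h|h] := lerP (complex.Re z) 0.
  exact: (le_trans h (cabs_ge0 z)).
have e : complex.Re z = Num.sqrt (complex.Re z ^+ 2) by rewrite sqrtr_sqr ger0_norm // ltW.
rewrite /cabs {1}e ler_wsqrtr // lerDl sqr_ge0 //.
Qed.

Lemma conj_real (R : realType) (a : R) : Num.conj ((a%:C)%C : R[i]) = (a%:C)%C.
Proof. transitivity ((a -i* 0)%C : R[i]); first reflexivity. by rewrite oppr0. Qed.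

Lemma cabs_real (R : realType) (a : R) : cabs ((a%:C)%C : R[i]) = `|a|.
Proof. by rewrite /cabs /= expr0n /= addr0 sqrtr_sqr. Qed.

Section IP.
Variables (R : realType) (V : lmodType R[i]) (ip : V -> V -> R[i]).
Hypothesis hI : is_inner_product ip.

Lemma ip0l z : ip 0 z = 0.
Proof.
have [lin _ _ _] := hI.
have h := lin 1 0 0 z; rewrite scaler0 addr0 mul1r in h.
by have := subrr (ip 0 z); rewrite {1}h addrK.
Qed.

Lemma ipZl a x z : ip (a *: x) z = a * ip x z.
Proof. by have [lin _ _ _] := hI; rewrite -[a *: x]addr0 lin ip0l addr0. Qed.

Lemma ipDl x y z : ip (x + y) z = ip x z + ip y z.
Proof. by have [lin _ _ _] := hI; have := lin 1 x y z; rewrite scale1r mul1r. Qed.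

Lemma ipNl x z : ip (- x) z = - ip x z.
Proof. by rewrite -scaleN1r ipZl mulN1r. Qed.

Lemma ipBl x y z : ip (x - y) z = ip x z - ip y z.
Proof. by rewrite ipDl ipNl. Qed.

Lemma ipC x y : ip y x = Num.conj (ip x y).
Proof. by case: hI. Qed.

Lemma ipZr a x z : ip x (a *: z) = Num.conj a * ip x z.
Proof. by rewrite ipC ipZl rmorphM /= -ipC. Qed.

Lemma ipDr x y z : ip z (x + y) = ip z x + ip z y.
Proof. by rewrite ipC ipDl rmorphD /= -!ipC. Qed.

Lemma ipNr x z : ip z (- x) = - ip z x.
Proof. by rewrite ipC ipNl rmorphN /= -ipC. Qed.

Lemma ipBr x y z : ip z (x - y) = ip z x - ip z y.
Proof. by rewrite ipDr ipNr. Qed.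

Lemma ip0r z : ip z 0 = 0.
Proof. by rewrite ipC ip0l rmorph0. Qed.

Lemma ipxx x : ip x x = ((hnorm ip x ^+ 2)%:C)%C.
Proof.
have [_ _ pos _] := hI; have := pos x; rewrite /hnorm.
case: (ip x x) => p q; rewrite lecE /= => /andP[/eqP -> hp].
by rewrite sqr_sqrtr.
Qed.

Lemma hnorm_ge0 x : 0 <= hnorm ip x.
Proof. exact: sqrtr_ge0. Qed.

Lemma CS x y : cabs (ip x y) <= hnorm ip x * hnorm ip y.
Proof.
have [y0|ny0] := eqVneq (hnorm ip y) 0.
  have [_ _ _ def] := hI.
  have -> : y = 0 by apply: def; rewrite ipxx y0 expr0n.
  by rewrite ip0r /cabs /= expr0n /= addr0 sqrtr0 mulr_ge0 // hnorm_ge0.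
pose w := ip y y *: x - ip x y *: y.
have E : ip w w = ip y y * (ip y y * ip x x - `|ip x y| ^+ 2).
  rewrite /w ipBl !ipZl !ipBr !ipZr normCK (ipC x y).
  have -> : Num.conj (ip y y) = ip y y by rewrite ipxx conj_real.
  ring.
have [_ _ pos _] := hI.
have := pos w; rewrite E !ipxx -cabsE.
rewrite (_ : _ * (_ - _) = ((hnorm ip y ^+ 2 * (hnorm ip y ^+2 * hnorm ip x ^+2 - cabs (ip x y) ^+ 2))%:C)%C); last first.
  by rewrite !(rmorphM, rmorphB, rmorphXn).
rewrite ler0c => h.
have hy : 0 < hnorm ip y ^+ 2 by rewrite exprn_gt0 // lt_def ny0 hnorm_ge0.
rewrite pmulr_rge0 // subr_ge0 -exprMn in h.
by rewrite -(ler_pXn2r (n:=2)) // ?nnegrE ?cabs_ge0 ?mulr_ge0 ?hnorm_ge0 // mulrC.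
Qed.

Lemma ReJ (z : R[i]) : complex.Re (Num.conj z) = complex.Re z.
Proof. by case: z. Qed.

Lemma Re_ipxx x : complex.Re (ip x x) = hnorm ip x ^+ 2.
Proof. by rewrite ipxx. Qed.

Lemma hnormD u v : hnorm ip (u + v) <= hnorm ip u + hnorm ip v.
Proof.
have h : hnorm ip (u + v) ^+ 2 =
    hnorm ip u ^+ 2 + hnorm ip v ^+ 2 + 2 * complex.Re (ip u v).
  rewrite -!Re_ipxx ipDl !ipDr (ipC u v).
  case: (ip u u) (ip u v) (ip v v) => [p1 q1] [p2 q2] [p3 q3] /=.
  ring.
have h1 := Re_le_cabs (ip u v); have h2 := CS u v.
rewrite -(ler_pXn2r (n:=2)) ?nnegrE ?addr_ge0 ?hnorm_ge0 // h.
lra.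
Qed.

Lemma buzano u v e : hnorm ip e = 1 ->
  2 * cabs (ip u e * ip e v) <= cabs (ip u v) + hnorm ip u * hnorm ip v.
Proof.
move=> he.
have ee : ip e e = 1 by rewrite ipxx he expr1n.
pose u' := (2 * ip u e) *: e - u.
have E1 : ip u' u' = ip u u.
  have c2 : Num.conj (2 * ip u e) = 2 * Num.conj (ip u e).
    by rewrite rmorphM rmorph_nat.
  rewrite /u' ipBl !ipZl !ipBr !ipZr ee (ipC u e) c2.
  ring.
have hu' : hnorm ip u' = hnorm ip u by rewrite /hnorm E1.
have E2 : 2 * (ip u e * ip e v) = ip u' v + ip u v.
  by rewrite /u' ipBl ipZl; ring.
have h := CS u' v; rewrite hu' in h.
rewrite (_ : 2 * cabs _ = cabs (2 * (ip u e * ip e v))); last first.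
  have c2 : cabs (2 : R[i]) = 2.
    rewrite /cabs /= (_ : (1 + 1) ^+ 2 + (0 + 0) ^+ 2 = (2 : R) ^+ 2); last by ring.
    by rewrite sqrtr_sqr ger0_norm.
  by rewrite [RHS]cabsM c2.
rewrite E2; apply: le_trans (cabsD _ _) _; lra.
Qed.

End IP.

Lemma sup_le0 (R : realType) (E : set R) B : 0 <= B ->
  (forall e, E e -> e <= B) -> sup E <= B.
Proof.
move=> B0 hB; have [[e Ee]|nE] := pselect (E !=set0).
  by apply: ge_sup; [exists e | exact: hB].
have -> : E = set0 by apply/seteqP; split => x // Ex; exfalso; apply: nE; exists x.
by rewrite sup0.
Qed.

Lemma sup_ge0' (R : realType) (E : set R) :
  (forall e, E e -> 0 <= e) -> 0 <= sup E.
Proof.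
move=> h; have [hs|hs] := pselect (has_sup E); last by rewrite sup_out.
case: hs => [[e Ee] ub]; apply: le_trans (h e Ee) _; exact: ub_le_sup ub e Ee.
Qed.

Lemma le_sup' (R : realType) (E : set R) e B :
  (forall y, E y -> y <= B) -> E e -> e <= sup E.
Proof. by move=> hB Ee; apply: ub_le_sup => //; exists B. Qed.


Unset Implicit Arguments. Set Strict Implicit.

Theorem theorem3p7 (R : realType) (V : lmodType R[i]) (ip : V -> V -> R[i])
  (hH : is_hilbert ip) (phi psi : R -> R)
  (hphi : {within `[0, 1]%classic, continuous phi}) (hpsi : {within `[0, 1]%classic, continuous psi})
  (A As : V -> V) (hA : is_bounded_op ip A) (hAs : is_adjoint ip A As)
  (t : R) (ht : t \in `[0, 1]) :
  numrad_t ip phi psi A As t ^+ 2 <=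
    `|phi t| ^+ 2 * numrad ip A ^+ 2
    + `|phi t * psi t| * numrad ip (fun x => A (A x))
    + (`|phi t| + `|psi t|) / 2 * `|psi t|
        * opnorm ip (fun x => As (A x) + A (As x)).
Proof.
case: hH => hI _; case: hA => _ [M hM].
set a := phi t; set b := psi t.
set W := numrad ip A; set W2 := numrad ip (fun x => A (A x)).
set N := opnorm ip (fun x => As (A x) + A (As x)).
have hn0 := hnorm_ge0 ip.
have Mx : forall x, hnorm ip (A x) <= `|M| * hnorm ip x.
  move=> x; apply: le_trans (hM x) _; apply: ler_wpM2r; [exact: hn0 | exact: ler_norm].
have M0 : 0 <= `|M| by [].
have Asb : forall y, hnorm ip (As y) <= `|M| * hnorm ip y.
  move=> y.
  have h1 : hnorm ip (As y) ^+ 2 = complex.Re (ip (A (As y)) y).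
    by rewrite hAs (Re_ipxx hI).
  have h2 := Re_le_cabs (ip (A (As y)) y).
  have h3 := CS hI (A (As y)) y.
  have h4 := Mx (As y).
  have h5 := hn0 (As y); have h6 := hn0 y.
  have h7 : hnorm ip (A (As y)) * hnorm ip y <= `|M| * hnorm ip (As y) * hnorm ip y.
    exact: ler_wpM2r.
  have hh : hnorm ip (As y) * hnorm ip (As y) <= `|M| * hnorm ip y * hnorm ip (As y).
    rewrite -expr2; lra.
  have [s0|sp] := eqVneq (hnorm ip (As y)) 0; first by rewrite s0 mulr_ge0.
  have sp' : 0 < hnorm ip (As y) by rewrite lt_def sp h5.
  by rewrite -(ler_pM2r sp').
have b1 : forall x, hnorm ip x = 1 -> cabs (ip (A x) x) <= `|M|.
  move=> x hx; apply: le_trans (CS hI _ _) _; rewrite hx mulr1.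
  by apply: le_trans (Mx x) _; rewrite hx mulr1.
have b2 : forall x, hnorm ip x = 1 -> cabs (ip (A (A x)) x) <= `|M| * `|M|.
  move=> x hx; apply: le_trans (CS hI _ _) _; rewrite hx mulr1.
  apply: le_trans (Mx _) _; apply: ler_wpM2l => //.
  by apply: le_trans (Mx x) _; rewrite hx mulr1.
have b3 : forall x, hnorm ip x = 1 ->
    hnorm ip (As (A x) + A (As x)) <= `|M| * `|M| + `|M| * `|M|.
  move=> x hx; apply: le_trans (hnormD hI _ _) _; apply: lerD.
    apply: le_trans (Asb _) _; apply: ler_wpM2l => //.
    by apply: le_trans (Mx x) _; rewrite hx mulr1.
  apply: le_trans (Mx _) _; apply: ler_wpM2l => //.
  by apply: le_trans (Asb x) _; rewrite hx mulr1.
have W0 : 0 <= W by apply: sup_ge0' => y [x _ <-]; exact: cabs_ge0.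
have W20 : 0 <= W2 by apply: sup_ge0' => y [x _ <-]; exact: cabs_ge0.
have N0 : 0 <= N by apply: sup_ge0' => y [x _ <-]; exact: hn0.
have key : forall x, hnorm ip x = 1 ->
    cabs (ip (((a%:C)%C) *: A x + ((b%:C)%C) *: As x) x) ^+ 2 <=
    `|a| ^+ 2 * W ^+ 2 + `|a * b| * W2 + (`|a| + `|b|) / 2 * `|b| * N.
  move=> x hx.
  set z := ip (A x) x.
  have hTz : ip (((a%:C)%C) *: A x + ((b%:C)%C) *: As x) x =
      (a%:C)%C * z + (b%:C)%C * Num.conj z.
    by rewrite (ipDl hI) !(ipZl hI) (ipC hI x (As x)) -hAs.
  have F1 : forall w : R[i], cabs ((a%:C)%C * w + (b%:C)%C * Num.conj w) ^+ 2 =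
      (a + b) ^+ 2 * complex.Re w ^+ 2 + (a - b) ^+ 2 * complex.Im w ^+ 2.
    case=> p q; rewrite cabs2 /=; ring.
  rewrite hTz F1.
  have hs := cabs2 z.
  have hz1 : cabs z <= W.
    apply: (le_sup' (B := `|M|)) => [y [y' hy' <-]|]; first exact: b1.
    by exists x.
  have hzu : cabs z <= hnorm ip (A x).
    by apply: le_trans (CS hI _ _) _; rewrite hx mulr1.
  have hzv : cabs z <= hnorm ip (As x).
    by rewrite /z hAs; apply: le_trans (CS hI _ _) _; rewrite hx mul1r.
  have buz := buzano hI (A x) (As x) hx.
  rewrite -/z -(hAs x x) -/z -(hAs (A x) x) cabsM in buz.
  have w2 : cabs (ip (A (A x)) x) <= W2.
    apply: (le_sup' (B := `|M| * `|M|)) => [y [y' hy' <-]|]; first exact: b2.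
    by exists x.
  have nn : hnorm ip (A x) ^+ 2 + hnorm ip (As x) ^+ 2 <= N.
    have e : complex.Re (ip (As (A x) + A (As x)) x) =
        hnorm ip (A x) ^+ 2 + hnorm ip (As x) ^+ 2.
      rewrite (ipDl hI) (ipC hI x (As (A x))) -(hAs x (A x)) (hAs (As x) x) !(ipxx hI) conj_real.
      by [].
    rewrite -e; apply: le_trans (Re_le_cabs _) _.
    apply: le_trans (CS hI _ _) _; rewrite hx mulr1.
    apply: (le_sup' (B := `|M| * `|M| + `|M| * `|M|)) => [y [y' hy' <-]|].
      exact: b3.
    by exists x.
  move: buz hs hz1 hzu hzv w2 nn.
  set s := cabs z; set p := complex.Re z; set q := complex.Im z.
  set hu := hnorm ip (A x); set hv := hnorm ip (As x).
  set c2 := cabs (ip (A (A x)) x).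
  move=> buz hs hz1 hzu hzv w2 nn.
  have s0 : 0 <= s by exact: cabs_ge0.
  have hu0 : 0 <= hu by exact: hn0.
  have hv0 : 0 <= hv by exact: hn0.
  have e0 : s * s <= hu * hv by exact: ler_pM.
  have e00 : hu * hv * 2 <= hu ^+ 2 + hv ^+ 2.
    have := sqr_ge0 (hu - hv); rewrite sqrrB; lra.
  have e1 : s * s <= W * W by exact: ler_pM.
  have na : `|a| ^+ 2 = a ^+ 2 by rewrite -normrX ger0_norm ?sqr_ge0.
  have nb : `|b| * `|b| = b ^+ 2 by rewrite -expr2 -normrX ger0_norm ?sqr_ge0.
  rewrite na normrM.
  have nab0 : 0 <= `|a| * `|b| by rewrite mulr_ge0.
  have hab1 : a * b <= `|a| * `|b| by rewrite -normrM ler_norm.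
  have hab2 : - (a * b) <= `|a| * `|b| by rewrite -normrM -normrN ler_norm.
  have f1 : a * b * p ^+ 2 <= `|a| * `|b| * p ^+ 2 by apply: ler_wpM2r; rewrite ?sqr_ge0.
  have f2 : - (a * b) * q ^+ 2 <= `|a| * `|b| * q ^+ 2 by apply: ler_wpM2r; rewrite ?sqr_ge0.
  have g1 : a ^+ 2 * (s * s) <= a ^+ 2 * (W * W) by apply: ler_wpM2l; rewrite ?sqr_ge0.
  have g2 : b ^+ 2 * (s * s) <= b ^+ 2 * (hu * hv) by apply: ler_wpM2l; rewrite ?sqr_ge0.
  have g3 : b ^+ 2 * (hu * hv * 2) <= b ^+ 2 * N.
    by apply: ler_wpM2l; rewrite ?sqr_ge0 //; apply: le_trans e00 nn.
  have g4 : `|a| * `|b| * (2 * (s * s)) <= `|a| * `|b| * (c2 + hu * hv).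
    by apply: ler_wpM2l.
  have g5 : `|a| * `|b| * c2 <= `|a| * `|b| * W2 by apply: ler_wpM2l.
  have g6 : `|a| * `|b| * (hu * hv * 2) <= `|a| * `|b| * N.
    by apply: ler_wpM2l => //; apply: le_trans e00 nn.
  have hs2 : s * s = p ^+ 2 + q ^+ 2 by rewrite -expr2.
  rewrite !expr2 in nb g1 g2 g3 hs2 f1 f2 *.
  nra.
have R0 : 0 <= `|a| ^+ 2 * W ^+ 2 + `|a * b| * W2 + (`|a| + `|b|) / 2 * `|b| * N.
  by rewrite !addr_ge0 // ?mulr_ge0 // ?divr_ge0 // ?addr_ge0 // ?exprn_ge0 // ?invr_ge0 ?ler0n.
rewrite /numrad_t /numrad.
set S := sup _.
have hS : S <= Num.sqrt (`|a| ^+ 2 * W ^+ 2 + `|a * b| * W2 + (`|a| + `|b|) / 2 * `|b| * N).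
  apply: sup_le0; first exact: sqrtr_ge0.
  move=> y [x hx <-].
  rewrite -(ger0_norm (cabs_ge0 _)) -sqrtr_sqr ler_wsqrtr //.
  exact: key.
have S0 : 0 <= S by apply: sup_ge0' => y [x _ <-]; exact: cabs_ge0.
have := ler_pM S0 S0 hS hS.
by rewrite -!expr2 sqr_sqrtr.
Qed.
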